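(* There is no circulant weighing matrix $CW(143,36)$.
   Context: A circulant weighing matrix $CW(n,k)$ is an $n\times n$ circulant matrix $W$ (each row after the first is the right cyclic shift of the previous row) with all entries in $\{0,1,-1\}$ such that $WW^T=kI_n$. *)

(* Defs.v *)
From mathcomp Require Import all_boot all_order all_algebra.
Import GRing.Theory Num.Theory.
Local Open Scope ring_scope.

Definition circulant (n : nat) (W : 'M[int]_n) : Prop :=
  forall (i j i' j' : 'I_n),
    val i' = i.+1 -> val j' = (j.+1 %% n)%N -> W i' j' = W i j.

Definition is_CW (n k : nat) (W : 'M[int]_n) : Prop :=
  circulant n W /\
  (forall i j, W i j \in [:: 0; 1; -1]) /\
  W *m W^T = (k%:Z)%:M.

(* Main.v *)
Require Import Defs.
From HB Require Import structures.
From mathcomp Require Import all_boot all_order all_algebra.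
From mathcomp Require Import ring zify.
Set Implicit Arguments. Unset Strict Implicit. Unset Printing Implicit Defensive.
Import GRing.Theory Num.Theory.
Local Open Scope ring_scope.

(* Proof: 3 is a multiplier (via an elementary local argument
   mod 4 and mod 9 in Z[C_143]), hence some shift of the first row is constant
   on the orbits of x -> 3x, and an exhaustive search over those finishes. *)

Definition cong (R : nzRingType) (m : nat) (x y : R) := exists t : R, x = y + m%:R * t.

Section Key.
Variable R : comNzRingType.
Lemma key (p s N : nat) (phi : R -> R) :
  (forall x y, phi (x + y) = phi x + phi y) -> (forall x y, phi (x * y) = phi x * phi y) ->
  phi 1 = 1 -> (1 < p)%N -> (0 < N)%N ->
  (forall y, cong p (phi y) (y ^+ (p ^ s)%N)) ->
  (forall y : R, cong p (y ^+ (p ^ N)%N) y) ->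
  forall a b : R, cong (p * p)%N (a * b) 0 -> cong (p * p)%N (phi a * b) 0.
Proof.
move=> phiD phiM phi1 p1 N0 Hphi Hq a b [c Hc].
have phi0 : phi 0 = 0.
  by apply: (@addrI _ (phi 0)); rewrite -phiD !addr0.
have phin n : phi n%:R = n%:R.
  by elim: n => [|n IH]; rewrite ?phi0 // -natr1 phiD IH phi1 natr1.
have phiN y : phi (- y) = - phi y.
  by apply: (@addrI _ (phi y)); rewrite -phiD !subrr phi0.
have phiB x y : phi (x - y) = phi x - phi y by rewrite phiD phiN.
set q := (p ^ N)%N; set r := (p ^ s)%N.
have q2 : (2 <= q)%N.
  apply: (@leq_trans p); first by []. rewrite /q -{1}(expn1 p); apply: leq_pexp2l; lia.
have r1 : (1 <= r)%N by rewrite /r expn_gt0; lia.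
set P := (p%:R : R).
have PP : (p * p)%:R = P * P :> R by rewrite natrM.
rewrite PP in Hc *; rewrite add0r in Hc.
set Qa := a ^+ (q - 2); set Qb := b ^+ (q - 2).
set Ar := a ^+ (r - 1).
set u := Qa * a; set v := Qb * b.
set Bv := (1 - v) ^+ (r - 1).
have qE : q = (q - 2).+2 by lia.
have rE : r = (r - 1).+1 by lia.
have Eq x : x ^+ q = x ^+ (q - 2) * x * x by rewrite -!exprSr -qE.
have Er x : x ^+ r = x ^+ (r - 1) * x by rewrite -!exprSr -rE.
have [e1 R4] : exists e1, phi a = Ar * a + P * e1.
  by case: (Hphi a) => e He; exists e; rewrite He -/r Er.
have [e2 R2] : exists e2, Qa * a * a = a + P * e2.
  by case: (Hq a) => e He; exists e; rewrite -He -/q Eq.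
have [e4 R3] : exists e4, Qb * b * b = b + P * e4.
  by case: (Hq b) => e He; exists e; rewrite -He -/q Eq.
have [e3 R5] : exists e3, phi (1 - v) = Bv * (1 - v) + P * e3.
  by case: (Hphi (1 - v)) => e He; exists e; rewrite He -/r Er.
set F := phi (Qb * c).
have Ea : a = (1 - v) * a + P * P * (Qb * c).
  by transitivity ((1 - v) * a + Qb * (a * b)); [rewrite /v; ring | rewrite Hc; ring].
have E6 : phi a = phi (1 - v) * phi a + P * P * F.
  by rewrite {1}Ea phiD (phiM (1 - v)) (phiM (P * P)) (phiM P P) phin.
have [t1 H1] : exists t1, phi a * (1 - u) = P * t1.
  exists (e1 * (1 - u) - Ar * e2); rewrite R4.
  have -> : (Ar * a + P * e1) * (1 - u) = Ar * a + P * e1 * (1 - u) - Ar * (Qa * a * a) by rewrite /u; ring.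
  by rewrite R2; ring.
have [t2 H2] : exists t2, phi (1 - v) * b = P * t2.
  exists (e3 * b - Bv * e4); rewrite R5.
  have -> : (Bv * (1 - v) + P * e3) * b = Bv * b + P * e3 * b - Bv * (Qb * b * b) by rewrite /v; ring.
  by rewrite R3; ring.
have Hub : u * b = P * P * (Qa * c) by rewrite /u -mulrA Hc; ring.
exists (t1 * t2 + phi (1 - v) * phi a * Qa * c + F * b).
rewrite add0r.
have -> : phi a * b = (phi (1 - v) * b) * (phi a * (1 - u)) + phi (1 - v) * phi a * (u * b) + P * P * F * b.
  by rewrite {1}E6; ring.
by rewrite H1 H2 Hub; ring.
Qed.
End Key.


Section GroupRing.
Variable T : finComUnitRingType.
Definition gr : Type := {ffun T -> int}.
HB.instance Definition _ := GRing.Zmodule.on gr.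
Definition gmul (f g : gr) : gr := [ffun k => \sum_i f i * g (k - i)].
Definition gone : gr := [ffun k => (k == 0)%:R].

Lemma gmulC : commutative gmul.
Proof.
move=> f g; apply/ffunP=> k; rewrite !ffunE.
rewrite (reindex_inj (inv_inj (subKr k))) /=.
by apply: eq_bigr => i _; rewrite subKr mulrC.
Qed.

Lemma gmulA : associative gmul.
Proof.
move=> f g h; apply/ffunP=> k; rewrite /gmul !ffunE.
under eq_bigr do rewrite ffunE big_distrr /=.
under [RHS]eq_bigr do rewrite ffunE big_distrl /=.
rewrite [RHS]exchange_big /=; apply: eq_bigr => i _.
rewrite [RHS](reindex_inj (addrI i)) /=.
apply: eq_bigr => j _; rewrite mulrA; congr (_ * _ * h _).
  by rewrite addrC addKr.
by rewrite opprD addrA.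
Qed.

Lemma gmul1 : left_id gone gmul.
Proof.
move=> f; apply/ffunP=> k; rewrite ffunE (bigD1 0) //= big1 ?addr0.
  by rewrite ffunE eqxx mul1r subr0.
by move=> i /negPf Hi; rewrite ffunE Hi mul0r.
Qed.

Lemma gmulDl : left_distributive gmul +%R.
Proof.
move=> f g h; apply/ffunP=> k; rewrite !ffunE -big_split /=.
by apply: eq_bigr => i _; rewrite !ffunE mulrDl.
Qed.

Lemma gone_neq0 : gone != 0.
Proof. by apply/eqP=> /ffunP /(_ 0); rewrite !ffunE eqxx. Qed.

HB.instance Definition _ := GRing.Zmodule_isComNzRing.Build gr gmulA gmulC gmul1 gmulDl gone_neq0.

Lemma grmulE (f g : gr) k : (f * g) k = \sum_i f i * g (k - i).
Proof. by rewrite ffunE. Qed.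
Lemma gr1E k : (1 : gr) k = (k == 0)%:R.
Proof. by rewrite ffunE. Qed.

Definition delta (a : T) : gr := [ffun k => (k == a)%:R].
Definition grC (c : int) : gr := [ffun k => c * (k == 0)%:R].
Definition phi (m : T) (f : gr) : gr := [ffun k => f (k / m)].

Lemma grDE (f g : gr) k : (f + g) k = f k + g k.
Proof. by rewrite ffunE. Qed.
Lemma grNE (f : gr) k : (- f) k = - f k.
Proof. by rewrite ffunE. Qed.
Lemma grBE (f g : gr) k : (f - g) k = f k - g k.
Proof. by rewrite !ffunE. Qed.
Lemma gr0E k : (0 : gr) k = 0.
Proof. by rewrite ffunE. Qed.

Lemma grC_mulE c (f : gr) k : (grC c * f) k = c * f k.
Proof.
rewrite mulrC grmulE (bigD1 k) //= big1 ?addr0.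
  by rewrite ffunE subrr eqxx mulr1 mulrC.
by move=> i Hi; rewrite ffunE subr_eq0 eq_sym (negPf Hi) mulr0 mulr0.
Qed.

Lemma grC1 : grC 1 = 1.
Proof. by apply/ffunP=> k; rewrite !ffunE mul1r. Qed.

Lemma grCD a b : grC (a + b) = grC a + grC b.
Proof. by apply/ffunP=> k; rewrite !ffunE mulrDl. Qed.

Lemma grCB a b : grC (a - b) = grC a - grC b.
Proof. by apply/ffunP=> k; rewrite !ffunE mulrBl. Qed.

Lemma grCM a b : grC (a * b) = grC a * grC b.
Proof. by apply/ffunP=> k; rewrite grC_mulE !ffunE mulrA. Qed.

Lemma grCn n : grC n%:R = n%:R.
Proof.
elim: n => [|n IH]; first by apply/ffunP=> k; rewrite !ffunE mul0r.
by rewrite -natr1 grCD IH grC1 natr1.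
Qed.

Lemma grCX a n : grC (a ^+ n) = grC a ^+ n.
Proof. by elim: n => [|n IH]; rewrite ?expr0 ?grC1 // !exprS grCM IH. Qed.

Lemma grnE n (f : gr) k : (n%:R * f) k = n%:R * f k.
Proof. by rewrite -grCn grC_mulE. Qed.

Lemma delta0 : delta 0 = 1.
Proof. by apply/ffunP=> k; rewrite !ffunE. Qed.

Lemma deltaM a b : delta a * delta b = delta (a + b).
Proof.
apply/ffunP=> k; rewrite grmulE (bigD1 a) //= big1 ?addr0.
  by rewrite !ffunE eqxx mul1r subr_eq addrC.
by move=> i Hi; rewrite ffunE (negPf Hi) mul0r.
Qed.

Lemma deltaX a n : delta a ^+ n = delta (a *+ n).
Proof.
elim: n => [|n IH]; first by rewrite expr0 mulr0n delta0.
by rewrite exprS IH deltaM mulrS.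
Qed.

Lemma gr_expand (f : gr) : f = \sum_i grC (f i) * delta i.
Proof.
apply/ffunP=> k; rewrite sum_ffunE (bigD1 k) //= big1 ?addr0.
  by rewrite grC_mulE ffunE eqxx mulr1.
by move=> i Hi; rewrite grC_mulE ffunE eq_sym (negPf Hi) mulr0.
Qed.

Section Phi.
Variable m : T.
Hypothesis mU : m \is a GRing.unit.

Lemma phiD f g : phi m (f + g) = phi m f + phi m g.
Proof. by apply/ffunP=> k; rewrite !ffunE. Qed.

Lemma phi1 : phi m 1 = 1.
Proof.
apply/ffunP=> k; rewrite !ffunE; congr (_%:R).
by rewrite -(inj_eq (mulIr mU)) divrK // mul0r.
Qed.

Lemma phiM f g : phi m (f * g) = phi m f * phi m g.
Proof.
apply/ffunP=> k; rewrite !ffunE.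
rewrite [RHS](reindex_inj (mulIr mU)) /=.
by apply: eq_bigr => i _; rewrite !ffunE mulrK // mulrBl mulrK.
Qed.

Lemma phi_delta a : phi m (delta a) = delta (a * m).
Proof.
apply/ffunP=> k; rewrite !ffunE; congr (_%:R).
by rewrite -(inj_eq (mulIr mU)) divrK.
Qed.

Lemma phi_grC c : phi m (grC c) = grC c.
Proof.
apply/ffunP=> k; rewrite !ffunE; congr (_ * _%:R).
by rewrite -(inj_eq (mulIr mU)) divrK // mul0r.
Qed.
End Phi.

Lemma phi_phi m m' f : m \is a GRing.unit -> m' \is a GRing.unit ->
  phi m (phi m' f) = phi (m' * m) f.
Proof.
by move=> mU m'U; apply/ffunP=> k; rewrite !ffunE invrM // mulrA.
Qed.

Lemma phi_id f : phi 1 f = f.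
Proof. by apply/ffunP=> k; rewrite ffunE invr1 mulr1. Qed.

End GroupRing.
Arguments grC {T} c.


Section Cong.
Variable R : comNzRingType.
Variable p : nat.
Implicit Types x y z : R.

Lemma cong_refl x : cong p x x.
Proof. by exists 0; rewrite mulr0 addr0. Qed.
Lemma cong_sym x y : cong p x y -> cong p y x.
Proof. by case=> t ->; exists (- t); rewrite mulrN addrK. Qed.
Lemma cong_trans x y z : cong p x y -> cong p y z -> cong p x z.
Proof. by case=> t ->; case=> u ->; exists (u + t); rewrite mulrDr addrA. Qed.
Lemma cong_add x x' y y' : cong p x x' -> cong p y y' -> cong p (x + y) (x' + y').
Proof. by case=> t ->; case=> u ->; exists (t + u); rewrite mulrDr; ring. Qed.
Lemma cong_opp x x' : cong p x x' -> cong p (- x) (- x').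
Proof. by case=> t ->; exists (- t); rewrite mulrN opprD. Qed.
Lemma cong_mul x x' y y' : cong p x x' -> cong p y y' -> cong p (x * y) (x' * y').
Proof.
by case=> t ->; case=> u ->; exists (t * y' + x' * u + p%:R * t * u); ring.
Qed.
Lemma cong_exp x y n : cong p x y -> cong p (x ^+ n) (y ^+ n).
Proof.
move=> H; elim: n => [|n IH]; first exact: cong_refl.
by rewrite !exprS; apply: cong_mul.
Qed.
Lemma cong_pmul x : cong p (p%:R * x) 0.
Proof. by exists x; rewrite add0r. Qed.

Hypothesis pP : prime p.

Lemma frob_add x y : cong p ((x + y) ^+ p) (x ^+ p + y ^+ p).
Proof.
have p0 : (0 < p)%N by apply: prime_gt0.
rewrite exprDn (bigD1 ord0) //= (bigD1 ord_max) //=.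
rewrite subn0 bin0 subnn binn !expr0 mulr1 mul1r !mulr1n.
set S := \sum_(i | _) _.
have [t Ht] : exists t, S = p%:R * t.
  exists (\sum_(i < p.+1 | (i != ord0) && (i != ord_max)) (x ^+ (p - i) * y ^+ i) *+ ('C(p, i) %/ p)).
  rewrite big_distrr /=; apply: eq_bigr => i /andP [H0 Hm].
  have Hi : (0 < i < p)%N.
    apply/andP; split; first by rewrite lt0n; apply: contra H0 => /eqP Hi; apply/eqP/val_inj.
    have := ltn_ord i; rewrite ltnS leq_eqVlt => /orP [/eqP Hi|//].
    by move: Hm; rewrite (_ : i = ord_max) ?eqxx //; apply/val_inj.
  rewrite mulr_natl -mulrnA divnK //; exact: prime_dvd_bin.
  by rewrite Ht; exists t; rewrite addrA.
by apply/eqP => /(congr1 val) /= H; move: p0; rewrite H.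
Qed.

Lemma cong_sum (I : finType) (F G : I -> R) :
  (forall i, cong p (F i) (G i)) -> cong p (\sum_i F i) (\sum_i G i).
Proof.
move=> H; elim/big_rec2: _ => [|i a b _ IH]; first exact: cong_refl.
exact: cong_add.
Qed.

Lemma frob_sum (I : finType) (F : I -> R) :
  cong p ((\sum_i F i) ^+ p) (\sum_i F i ^+ p).
Proof.
elim/big_rec2: _ => [|i a b _ IH].
  by rewrite expr0n (gtn_eqF (prime_gt0 pP)); exact: cong_refl.
apply: cong_trans (frob_add _ _) _; apply: cong_add; first exact: cong_refl.
exact: IH.
Qed.

Lemma frob_pmul x y : cong p ((x + p%:R * y) ^+ p) (x ^+ p).
Proof.
apply: cong_trans (frob_add _ _) _.
rewrite -[X in cong _ _ X]addr0; apply: cong_add; first exact: cong_refl.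
have E : (p%:R : R) ^+ p = p%:R * p%:R ^+ p.-1 by rewrite -exprS prednK // prime_gt0.
by rewrite exprMn E -mulrA; apply: cong_pmul.
Qed.

End Cong.

Lemma fermat_int p (c : int) : prime p -> cong p (c ^+ p) c.
Proof.
move=> pP.
have Hn n : cong p ((n%:R : int) ^+ p) n%:R.
  elim: n => [|n IH]; first by rewrite expr0n (gtn_eqF (prime_gt0 pP)); exact: cong_refl.
  rewrite -natr1; apply: cong_trans (frob_add _ _ _) _ => //.
  by rewrite expr1n; apply: cong_add => //; apply: cong_refl.
case: c => n; first by rewrite -natz; apply: Hn.
rewrite NegzE -natz.
set N := (n.+1)%:R : int.
have H1 := cong_sym (frob_add pP (- N) N).
rewrite addNr expr0n (gtn_eqF (prime_gt0 pP)) in H1.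
have H2 := cong_add H1 (cong_opp (Hn n.+1)).
by rewrite addrK sub0r in H2.
Qed.

Section GrFrob.
Variable T : finComUnitRingType.
Variable p : nat.
Hypothesis pP : prime p.
Hypothesis pU : (p%:R : T) \is a GRing.unit.

Lemma gr_frob (y : gr T) : cong p (y ^+ p) (phi (p%:R) y).
Proof.
rewrite {1}(gr_expand y).
apply: cong_trans (frob_sum pP _) _.
have -> : phi p%:R y = \sum_i grC (y i) * delta (i * p%:R).
  apply/ffunP=> k; rewrite sum_ffunE ffunE (bigD1 (k / p%:R)) //= big1 ?addr0.
    by rewrite grC_mulE ffunE divrK // eqxx mulr1.
  move=> i Hi; rewrite grC_mulE ffunE.
  case: eqP => [Hk|]; last by rewrite mulr0.
  by move: Hi; rewrite Hk mulrK // eqxx.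
apply: cong_sum => i.
rewrite exprMn -grCX deltaX mulr_natr.
have [t Ht] := fermat_int (y i) pP.
rewrite Ht grCD grCM grCn mulrDl.
rewrite -[X in cong _ _ X]addr0; apply: cong_add; first exact: cong_refl.
by rewrite -!mulrA; apply: cong_pmul.
Qed.

Lemma gr_frob_iter k (y : gr T) : cong p (y ^+ (p ^ k)%N) (phi (p%:R ^+ k) y).
Proof.
elim: k y => [|k IH] y; first by rewrite expn0 expr1 expr0 phi_id; apply: cong_refl.
rewrite expnSr exprM.
apply: cong_trans; first exact: cong_exp (IH y).
apply: cong_trans (gr_frob _) _.
by rewrite phi_phi ?unitrX // -exprSr; apply: cong_refl.
Qed.
End GrFrob.


Definition szs : seq nat := [:: 1; 15; 15; 15; 15; 15; 15; 3; 5; 15; 3; 5; 15; 3; 3].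
Definition reps : seq nat := [:: 0; 1; 2; 4; 5; 7; 10; 11; 13; 20; 22; 26; 29; 44; 77].
Definition oi : seq nat := [:: 0; 1; 2; 1; 3; 4; 2; 5; 5; 1; 6; 7; 3; 8; 1; 4; 1; 6; 2; 2; 9; 5; 10; 3; 5; 3; 11; 1; 2; 12; 6; 4; 2; 7; 9; 12; 3; 9; 3; 8; 12; 2; 1; 6; 13; 4; 5; 9; 1; 3; 5; 6; 8; 1; 2; 10; 3; 2; 4; 9; 9; 12; 6; 5; 3; 8; 10; 4; 12; 3; 4; 4; 5; 5; 12; 3; 5; 14; 11; 12; 4; 1; 3; 2; 2; 5; 9; 12; 14; 9; 6; 11; 1; 4; 12; 6; 2; 4; 5; 7; 1; 6; 9; 3; 11; 12; 2; 12; 3; 2; 13; 9; 5; 1; 3; 9; 6; 8; 12; 4; 12; 14; 4; 2; 9; 9; 1; 6; 5; 6; 11; 12; 13; 1; 6; 4; 4; 9; 5; 12; 6; 9; 6].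
Definition ex : seq nat := [:: 0; 0; 0; 14; 0; 0; 14; 0; 8; 13; 0; 0; 14; 0; 9; 14; 2; 2; 13; 11; 0; 14; 0; 4; 7; 8; 0; 12; 9; 0; 14; 6; 2; 2; 2; 2; 13; 13; 11; 4; 10; 6; 8; 5; 0; 13; 12; 11; 1; 1; 1; 1; 1; 3; 12; 1; 9; 10; 7; 3; 14; 11; 6; 13; 2; 2; 2; 8; 12; 3; 9; 10; 6; 5; 8; 7; 4; 0; 4; 7; 2; 11; 6; 4; 8; 3; 5; 14; 2; 7; 13; 3; 6; 5; 6; 11; 1; 1; 9; 1; 10; 3; 1; 5; 1; 1; 3; 3; 12; 7; 1; 12; 2; 4; 10; 4; 7; 3; 13; 11; 9; 1; 3; 5; 6; 8; 7; 12; 10; 4; 2; 4; 2; 5; 8; 12; 4; 9; 11; 5; 9; 10; 10].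

Definition oidx (n : nat) : nat := nth 0%N oi n.
Definition corr (c : seq int) (s : nat) : int :=
  foldr (fun n acc => c`_(oidx n) * c`_(oidx ((n + 143 - s) %% 143)) + acc) 0 (iota 0 143).

Definition target (s : nat) : int := if s == 0%N then Posz 36 else Posz 0.
Fixpoint goodl (c : seq int) (l : seq nat) : bool :=
  match l with
  | [::] => true
  | s :: l' => if corr c s == target s then goodl c l' else false
  end.
Definition good (c : seq int) : bool := goodl c (iota 1 142).

Fixpoint chk (sz : seq nat) (r : nat) (acc : seq int) : bool :=
  match sz with
  | [::] => if r == 0%N then ~~ good (rev acc) else true
  | s :: sz' => chk sz' r (0 :: acc) &&
      (if (s <= r)%N then chk sz' (r - s) (1 :: acc) && chk sz' (r - s) (-1 :: acc) else true)
  end.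

Definition wt (sz : seq nat) (d : seq int) : nat :=
  \sum_(k < size sz) nth 0%N sz k * (nth (0 : int) d k != 0).

Lemma foldr_sum (F : nat -> int) l :
  foldr (fun n acc => F n + acc) 0 l = \sum_(n <- l) F n.
Proof. by elim: l => [|x l IH]; rewrite ?big_nil ?big_cons //= IH. Qed.

Lemma goodl_ok c l : (forall s, s \in l -> corr c s = target s) -> goodl c l.
Proof.
elim: l => [|s l IH] H //=.
rewrite H ?mem_head // eqxx; apply: IH => x Hx; apply: H.
by rewrite in_cons Hx orbT.
Qed.

Lemma chk_ok sz r acc d : chk sz r acc -> size d = size sz ->
  all (fun x => x \in [:: 0; 1; -1]) d -> wt sz d = r -> ~~ good (rev acc ++ d).
Proof.
elim: sz r acc d => [|s sz IH] r acc d /=.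
  case: d => // Hc _ _; rewrite /wt big_ord0 => Hr.
  by rewrite cats0; rewrite -Hr eqxx in Hc.
case: d => // x d /andP [H0 H1] [Hs] /andP [Hx Hd].
rewrite /wt /= big_ord_recl /= -/(wt sz d).
rewrite !inE in Hx; case/or3P: Hx => /eqP ->.
- rewrite eqxx muln0 add0n => Hw.
  by rewrite -cat_rcons -rev_cons; apply: (IH r).
- rewrite muln1 => Hw.
  have Hsr : (s <= r)%N by rewrite -Hw leq_addr.
  move: H1; rewrite Hsr => /andP [H1 _].
  rewrite -cat_rcons -rev_cons; apply: (IH (r - s)%N) => //.
  by rewrite -Hw addKn.
- rewrite muln1 => Hw.
  have Hsr : (s <= r)%N by rewrite -Hw leq_addr.
  move: H1; rewrite Hsr => /andP [_ H1].
  rewrite -cat_rcons -rev_cons; apply: (IH (r - s)%N) => //.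
  by rewrite -Hw addKn.
Qed.

Lemma bucket (L : seq nat) (g : nat -> int) : all (fun x => x < 15)%N L ->
  \sum_(x <- L) g x = \sum_(k < 15) (count_mem (k : nat) L)%:R * g k.
Proof.
elim: L => [|x L IH] /=.
  by move=> _; rewrite big_nil big1 // => k _; rewrite mul0r.
case/andP=> Hx HL; rewrite big_cons IH //.
have -> : \sum_(k < 15) ((x == k) + count_mem (k : nat) L)%:R * g k =
          \sum_(k < 15) (x == k)%:R * g k + \sum_(k < 15) (count_mem (k : nat) L)%:R * g k.
  by rewrite -big_split /=; apply: eq_bigr => k _; rewrite natrD mulrDl.
congr (_ + _); rewrite (bigD1 (Ordinal Hx)) //= eqxx mul1r big1 ?addr0 //.
move=> k Hk; rewrite (_ : (x == k) = false) ?mul0r //.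
by apply/negbTE; apply: contra Hk => /eqP Hk; apply/eqP/val_inj.
Qed.

Lemma chk_true : chk szs 36 [::].
Proof. by vm_compute. Qed.


Notation T := 'Z_143.
Definition g3 (x : nat) : nat := ((3 * x) %% 143)%N.

Lemma orbchk : all (fun n => iter (nth 0%N ex n) g3 n == nth 0%N reps (oidx n)) (iota 0 143).
Proof. by vm_compute. Qed.
Lemma oidx_lt : all (fun n => oidx n < 15)%N (iota 0 143).
Proof. by vm_compute. Qed.
Lemma oiE : map oidx (iota 0 143) = oi.
Proof. by vm_compute. Qed.
Lemma cntE : [seq count_mem k oi | k <- iota 0 15] = szs.
Proof. by vm_compute. Qed.
Lemma cntE' k : (k < 15)%N -> count_mem k oi = nth 0%N szs k.
Proof. by move=> Hk; rewrite -cntE (nth_map 0%N) ?size_iota // nth_iota. Qed.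
Lemma oi_all : all (fun x => x < 15)%N oi.
Proof. by vm_compute. Qed.

Lemma final_search (f : T -> int) :
  (forall i, f (i * 3%:R) = f i) ->
  (forall i, f i \in [:: 0; 1; -1]) ->
  (forall s : T, \sum_i f i * f (i - s) = (s == 0)%:R * 36) -> False.
Proof.
move=> Hinv Hval Hcorr.
pose f' (n : nat) := f n%:R.
have step n : f' (g3 n) = f' n.
  by rewrite /f' /g3 Zp_nat_mod // natrM mulrC Hinv.
have iterE e n : f' (iter e g3 n) = f' n.
  by elim: e => [|e IH] //=; rewrite step.
set c := [seq f' r | r <- reps].
have Hc n : (n < 143)%N -> f' n = c`_(oidx n).
  move=> Hn.
  have Hl : (oidx n < 15)%N by move/allP: oidx_lt => /(_ n); rewrite mem_iota; apply.
  rewrite (nth_map 0%N) //.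
  move/allP: orbchk => /(_ n); rewrite mem_iota /= => /(_ Hn) /eqP <-.
  by rewrite iterE.
have Hfi (i : T) : f i = c`_(oidx i).
  by rewrite -Hc ?ltn_ord // /f' natr_Zp.
have corrE s : (s < 143)%N -> corr c s = \sum_(i : T) f i * f (i - s%:R).
  move=> Hs; rewrite /corr foldr_sum.
  have -> : iota 0 143 = index_iota 0 143 by [].
  rewrite big_mkord; apply: eq_bigr => i _.
  rewrite -!Hfi; congr (_ * _).
  rewrite -Hc ?ltn_pmod // /f' Zp_nat_mod // natrB; last by lia.
  by rewrite natrD pchar_Zp // addr0 natr_Zp.
have Hval' n : f' n \in [:: 0; 1; -1] by apply: Hval.
have goodc : good c.
  apply: goodl_ok => s; rewrite mem_iota => /andP [Hs1 Hs2].
  rewrite corrE; last by lia.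
  rewrite Hcorr /target.
  have -> : (s%:R == 0 :> T) = false.
    apply/negbTE/eqP => H; have := val_Zp_nat (p := 143) isT s.
    by rewrite H /= modn_small //; lia.
  by rewrite mul0r (_ : (s == 0)%N = false) //; lia.
have sizec : size c = 15%N by rewrite size_map.
have allc : all (fun x => x \in [:: 0; 1; -1]) c.
  by apply/allP => x /mapP [r _ ->].
have wt36 : wt szs c = 36%N.
  have H0 := corrE 0%N isT.
  rewrite Hcorr eqxx mul1r in H0.
  rewrite /corr foldr_sum in H0.
  have E1 : \sum_(n <- iota 0 143) c`_(oidx n) * c`_(oidx ((n + 143 - 0) %% 143)) =
            \sum_(n <- iota 0 143) c`_(oidx n) * c`_(oidx n).
    rewrite !big_seq; apply: eq_bigr => n; rewrite mem_iota /= => Hn.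
    by rewrite subn0 modnDr modn_small.
  rewrite E1 -(big_map oidx xpredT (fun x => c`_x * c`_x)) oiE in H0.
  rewrite bucket ?oi_all // in H0.
  apply/eqP; rewrite -(eqr_nat int) -H0 /wt natr_sum.
  apply/eqP; apply: eq_bigr => k _.
  have Hk := ltn_ord k.
  rewrite cntE' //.
  rewrite natrM; congr (_ * _).
  have : c`_k \in [:: 0; 1; -1] by apply: (allP allc); apply: mem_nth; rewrite sizec.
  by rewrite !inE => /or3P [] /eqP ->.
have := chk_ok chk_true sizec allc wt36.
by rewrite /= goodc.
Qed.


Lemma natZ_succ (n : nat) : ((n.+1)%:R : T) = n%:R + 1.
Proof. by rewrite -natr1. Qed.

Lemma W_circ (W : 'M[int]_143) : circulant 143 W ->
  forall i j : 'I_143, W i j = W 0 ((j : T) - (i : T)).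
Proof.
move=> HC.
suff H n (Hn : (n < 143)%N) (j : 'I_143) : W (Ordinal Hn) j = W 0 ((j : T) - (Ordinal Hn : T)).
  by move=> [i Hi] j; apply: H.
elim: n Hn j => [|n IH] Hn j.
  by rewrite (_ : Ordinal Hn = 0); [rewrite subr0 | apply: val_inj].
have Hn' : (n < 143)%N by lia.
set j0 : T := (j : T) - 1.
have Hj : val j = ((val j0).+1 %% 143)%N.
  have := val_Zp_nat (p := 143) isT (val j0).+1.
  by rewrite natZ_succ natr_Zp /j0 subrK => <-.
have Ei : (Ordinal Hn : T) = (Ordinal Hn' : T) + 1.
  apply: val_inj => /=; change (Zp_trunc 143).+2 with 143%N.
  by rewrite addn1 !modn_small.
rewrite (HC (Ordinal Hn') j0 (Ordinal Hn) j) //= IH Ei.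
by rewrite /j0 opprD addrA addrAC.
Qed.

Notation R := (gr T).

Lemma u2 : (2%:R : T) \is a GRing.unit. Proof. by rewrite unitZpE. Qed.
Lemma u3 : (3%:R : T) \is a GRing.unit. Proof. by rewrite unitZpE. Qed.
Lemma um1 : (-1 : T) \is a GRing.unit. Proof. by rewrite unitrN1. Qed.
Lemma e228 : (2%:R : T) ^+ 28 = 3%:R. Proof. by apply/eqP; vm_compute. Qed.
Lemma e260 : (2%:R : T) ^+ 60 = 1. Proof. by apply/eqP; vm_compute. Qed.
Lemma e315 : (3%:R : T) ^+ 15 = 1. Proof. by apply/eqP; vm_compute. Qed.

Lemma natgrE n (s : T) : (n%:R : R) s = n%:R * (s == 0)%:R.
Proof. by rewrite -grCn ffunE. Qed.

Lemma gr_cancel n (f g : R) : (0 < n)%N -> n%:R * f = n%:R * g -> f = g.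
Proof.
move=> Hn H; apply/ffunP => k.
have := congr1 (fun h : R => h k) H; rewrite /= !grnE.
by apply: mulfI; rewrite pnatr_eq0 -lt0n.
Qed.

Lemma starE (f : R) (s : T) : (f * phi (-1) f) s = \sum_i f i * f (i - s).
Proof.
rewrite grmulE; apply: eq_bigr => i _.
by rewrite ffunE invrN1 mulrN1 opprB.
Qed.

Lemma delta_mulE (a : T) (f : R) i : (delta a * f) i = f (i - a).
Proof.
rewrite grmulE (bigD1 a) //= big1 ?addr0; first by rewrite ffunE eqxx mul1r.
by move=> l Hl; rewrite ffunE (negPf Hl) mul0r.
Qed.

Lemma phi_nat m n : m \is a GRing.unit -> phi m (n%:R : R) = n%:R.
Proof. by move=> mU; rewrite -grCn phi_grC. Qed.

Lemma sq_sum_one (Y : R) : \sum_i Y i * Y i = 1 ->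
  exists j, (Y j = 1 \/ Y j = -1) /\ forall i, i != j -> Y i = 0.
Proof.
move=> H.
have [j Hj] : exists j, Y j != 0.
  case: (boolP [exists i, Y i != 0]) => [/existsP //|/existsPn Hn].
  move: H; rewrite big1 // => i _; move: (Hn i); rewrite negbK => /eqP ->.
  by rewrite mul0r.
have Hge : 0 <= \sum_(i | i != j) Y i * Y i.
  by apply: sumr_ge0 => i _; rewrite -expr2 sqr_ge0.
move: H; rewrite (bigD1 j) //= => H.
have Hjj : 1 <= Y j * Y j.
  move: Hj; case: (Y j) => n; last by rewrite NegzE mulrNN; nia.
  by move=> Hn; nia.
have [H0 H1] : \sum_(i | i != j) Y i * Y i = 0 /\ Y j * Y j = 1.
  by move: H Hge Hjj; set a := Y j * Y j; set S := \sum_(i | _) _; lia.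
exists j; split.
  have : Y j ^+ 2 == 1 by rewrite expr2 H1.
  by rewrite sqrf_eq1 => /orP [] /eqP ->; [left | right].
move=> i Hi.
have Hp : forall l, l != j -> 0 <= Y l * Y l by move=> l _; rewrite -expr2 sqr_ge0.
by have /eqP := psumr_eq0P Hp H0 Hi; rewrite mulf_eq0 orbb => /eqP.
Qed.

Definition wrow (W : 'M[int]_143) : R := [ffun j : T => W 0 j].

Lemma ww W : is_CW 143 36 W -> wrow W * phi (-1) (wrow W) = 36%:R.
Proof.
case=> HC [_ HW]; apply/ffunP => s.
rewrite starE natgrE.
have := congr1 (fun M : 'M[int]_143 => M 0 s) HW; rewrite !mxE => H.
have H' : \sum_j W 0 j * W s j = 36 *+ (0 == s).
  by rewrite -H; apply: eq_bigr => j _; rewrite mxE.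
rewrite eq_sym mulr_natr -H'; apply: eq_bigr => i _.
by rewrite !ffunE (W_circ HC s i).
Qed.

Theorem proposition5 : ~ (exists W : 'M[int]_143, is_CW 143 36 W).
Proof.
move=> [W HW].
have Hww := ww HW.
have Hv : forall j, wrow W j \in [:: 0; 1; -1].
  by move=> j; rewrite ffunE; case: HW => _ [H _]; exact: H.
set w := wrow W in Hww Hv.
set ws := phi (-1) w in Hww.
have phiD3 : forall x y : R, phi 3%:R (x + y) = phi 3%:R x + phi 3%:R y.
  by move=> x y; apply: phiD.
have K2 : cong (2 * 2)%N (phi 3%:R w * ws) 0.
  apply: (key (p := 2) (s := 28) (N := 60)).
  - exact: phiD3.
  - exact: phiM u3.
  - exact: phi1 u3.
  - by [].
  - by [].
  - by move=> y; apply: cong_sym; rewrite -e228; apply: gr_frob_iter => //; exact: u2.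
  - by move=> y; rewrite -{2}(phi_id y) -e260; apply: gr_frob_iter => //; exact: u2.
  - by rewrite Hww; exists 9%:R; rewrite add0r -natrM.
have K3 : cong (3 * 3)%N (phi 3%:R w * ws) 0.
  apply: (key (p := 3) (s := 1) (N := 15)).
  - exact: phiD3.
  - exact: phiM u3.
  - exact: phi1 u3.
  - by [].
  - by [].
  - move=> y; apply: cong_sym; have := gr_frob_iter (p := 3) isT u3 1 y.
    by rewrite expr1.
  - by move=> y; rewrite -{2}(phi_id y) -e315; apply: gr_frob_iter => //; exact: u3.
  - by rewrite Hww; exists 4%:R; rewrite add0r -natrM.
case: K2 => t2; rewrite add0r => HX2.
case: K3 => t3; rewrite add0r => HX3.
set Y := t2 - 2%:R * t3.
have HXY : phi 3%:R w * ws = 36%:R * Y.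
  transitivity (9%:R * (phi 3%:R w * ws) - 8%:R * (phi 3%:R w * ws)); first by ring.
  by rewrite {1}HX2 HX3 /Y; ring.
clearbody Y.
have XXs : (phi 3%:R w * ws) * phi (-1) (phi 3%:R w * ws) = 36%:R * 36%:R.
  rewrite (phiM um1) phi_phi ?u3 ?um1 // /ws phi_phi ?um1 // mulrNN mulr1 phi_id.
  have -> : phi (3%:R * -1) w = phi 3%:R (phi (-1) w) by rewrite phi_phi ?u3 ?um1 // mulrC.
  have -> : phi 3%:R w * phi (-1) w * (phi 3%:R (phi (-1) w) * w) =
            phi 3%:R (w * phi (-1) w) * (w * phi (-1) w) by rewrite (phiM u3); ring.
  by rewrite -/ws Hww phi_nat ?u3.
have YY : Y * phi (-1) Y = 1.
  apply: (@gr_cancel (36 * 36)) => //.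
  rewrite mulr1 natrM -[RHS]XXs HXY (phiM um1) phi_nat ?um1 //; ring.
have Hsq : \sum_i Y i * Y i = 1.
  have := congr1 (fun h : R => h 0) YY; rewrite /= starE gr1E eqxx => H.
  transitivity (true%:R : int) => //; rewrite -H.
  by apply: eq_bigr => i _; rewrite subr0.
have [j [Hj1 Hj0]] := sq_sum_one Hsq.
set e := Y j in Hj1.
have HYd : Y = grC e * delta j.
  apply/ffunP => k; rewrite grC_mulE ffunE.
  case: (eqVneq k j) => [->|Hk]; first by rewrite /= mulr1n mulr1.
  by rewrite /= mulr0n mulr0 Hj0.
have Hphiw : phi 3%:R w = Y * w.
  apply: (@gr_cancel 36) => //.
  by rewrite mulrA -HXY -mulrA (mulrC ws) Hww mulrC.
set k : T := - (j / 2%:R).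
have Hk : k * 3%:R + j = k.
  have H2 : k * 2%:R = - j by rewrite /k mulNr divrK ?u2.
  have -> : (3%:R : T) = 2%:R + 1 by rewrite natr1.
  by rewrite mulrDr mulr1 H2; ring.
set w' := delta k * w.
have Hw'v i : w' i \in [:: 0; 1; -1] by rewrite delta_mulE Hv.
have Hw'w' : w' * phi (-1) w' = 36%:R.
  by rewrite /w' (phiM um1) phi_delta ?um1 // mulrN1 mulrACA deltaM subrr delta0 mul1r Hww.
have Hphiw' : phi 3%:R w' = grC e * w'.
  rewrite /w' (phiM u3) phi_delta ?u3 // Hphiw HYd.
  rewrite -[in RHS]Hk -deltaM; ring.
have pointwise i : w' i = e * w' (i * 3%:R).
  have := congr1 (fun h : R => h (i * 3%:R)) Hphiw'.
  by rewrite /= grC_mulE ffunE mulrK ?u3.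
case: Hj1 => He.
- apply: (final_search (f := w')).
  + by move=> i; rewrite [RHS]pointwise He mul1r.
  + exact: Hw'v.
  + by move=> s; rewrite -starE Hw'w' natgrE mulrC.
- have Hn n i : w' i = (-1) ^+ n * w' (i * 3%:R ^+ n).
    elim: n i => [|n IH] i; first by rewrite expr0 mul1r mulr1.
    rewrite IH (pointwise (i * 3%:R ^+ n)) He !exprSr mulrA.
    by rewrite mulrA.
  have H0 i : w' i = 0.
    have := Hn 15%N i; rewrite e315 mulr1 -signr_odd /= expr1.
    by move=> H; lia.
  have := congr1 (fun h : R => h 0) Hw'w'; rewrite starE natgrE eqxx big1 //.
  by move=> i _; rewrite H0 mul0r.
Qed.
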